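(* Let $\mathcal R$ be a species of tree on $T_0=\{1,\dots,n\}$ and $A=\sum_{T\in\mathcal R}\lambda(T)A(T)$ with $\lambda(T)\in\mathbf Q$. Then $A$ is diagonalizable and its eigenvalues are $0$ and the numbers $$\sum_{T\in\mathcal R,\ T\supset T_1}\lambda(T)\,n(T),\qquad T_1\in\mathcal R.$$
   Context: A species of tree is a family $\mathcal R$ of subsets of $T_0$ containing $T_0$, each of cardinality $\ge 2$, any two of which are either disjoint or nested. $n(T)$ is the cardinality of $T$. For $T$ with $n(T)\ge2$, $A(T)=(\alpha_{i,j})$ is the $n\times n$ matrix with $\alpha_{i,j}=-1$ if $i\ne j$, $\{i,j\}\subset T$, $\alpha_{i,i}=n(T)-1$ if $i\in T$, and $0$ otherwise. *)

(* Defs.v *)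
From mathcomp Require Import all_boot all_order all_algebra.
Set Implicit Arguments. Unset Strict Implicit. Unset Printing Implicit Defensive.
Import GRing.Theory Num.Theory.
Local Open Scope ring_scope.

(* T_0 = {1,...,n} is modelled by the finite type 'I_n = {0,...,n-1}. *)

Definition species_of_tree (n : nat) (R : {set {set 'I_n}}) : Prop :=
  [/\ [set: 'I_n] \in R,
      (forall T, T \in R -> (2 <= #|T|)%N) &
      (forall T U, T \in R -> U \in R ->
         [disjoint T & U] \/ T \subset U \/ U \subset T)].

Definition AT (n : nat) (T : {set 'I_n}) : 'M[rat]_n :=
  \matrix_(i, j)
    if i == j then (if i \in T then (#|T|%:R - 1) else 0)
    else (if (i \in T) && (j \in T) then -1 else 0).

Definition Asum (n : nat) (R : {set {set 'I_n}}) (lambda : {set 'I_n} -> rat)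
  : 'M[rat]_n := \sum_(T in R) lambda T *: AT T.

(* Main.v *)
Require Import Defs.
From mathcomp Require Import all_boot all_order all_algebra.
From mathcomp Require Import ring.
Set Implicit Arguments. Unset Strict Implicit. Unset Printing Implicit Defensive.
Import GRing.Theory Num.Theory.
Local Open Scope ring_scope.

Section S.
Variable n : nat.
Implicit Types S T U : {set 'I_n}.

Lemma ATE T i j : AT T i j =
  ((i \in T) && (j \in T))%:R * ((i == j)%:R * #|T|%:R - 1).
Proof.
rewrite /AT mxE; case: eqP => [->|_]; rewrite ?andbb;
  case: (i \in T); case: (j \in T) => /=; ring.
Qed.

Lemma AT_sym T i j : AT T i j = AT T j i.
Proof. by rewrite !ATE andbC eq_sym. Qed.

Lemma mulAT m (M : 'M[rat]_(m, n)) U k j :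
  (M *m AT U) k j = if j \in U then #|U|%:R * M k j - \sum_(i in U) M k i else 0.
Proof.
rewrite mxE; case: ifP => jU.
  rewrite (eq_bigr (fun i => (i == j)%:R * #|U|%:R * M k i - (i \in U)%:R * M k i)); last first.
    move=> i _; rewrite ATE jU andbT; case: eqP => [->|_]; rewrite ?jU /=; ring.
  rewrite sumrB; congr (_ - _).
  rewrite (bigD1 j) //= eqxx big1 ?addr0 => [|i /negPf ->]. 
    by rewrite mul1r.
    by rewrite !mul0r.
  rewrite [RHS]big_mkcond /=; apply: eq_bigr => i _; case: (i \in U) => /=; ring.
by rewrite big1 // => i _; rewrite ATE jU andbF mul0r mulr0.
Qed.

Lemma AT_out T i j : j \notin T -> AT T i j = 0.
Proof. by move/negPf=> jT; rewrite ATE jT andbF mul0r. Qed.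

Lemma AT_tr T : (AT T)^T = AT T.
Proof. by apply/matrixP => i j; rewrite mxE AT_sym. Qed.

Lemma rowsum0 T k : \sum_i AT T k i = 0.
Proof.
have := mulAT (const_mx 1 : 'rV[rat]_n) T 0 k.
rewrite mxE (eq_bigr (fun i => AT T k i)) => [->|i _]; last by rewrite mxE mul1r AT_sym.
case: ifP => // _; rewrite mxE mulr1 (eq_bigr (fun _ => 1)) => [|i _]; last by rewrite mxE.
by rewrite sumr_const subrr.
Qed.

Lemma rowsum_sub T U k : T \subset U -> \sum_(i in U) AT T k i = 0.
Proof.
move=> TU; transitivity (\sum_i AT T k i); last exact: rowsum0.
rewrite [RHS](bigID (fun i => i \in U)) /=.
rewrite [X in _ = _ + X]big1 ?addr0 // => i iU.
by apply: AT_out; apply: contra iU; apply: (subsetP TU).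
Qed.

Lemma rowsum_disj T U k : [disjoint T & U] -> \sum_(i in U) AT T k i = 0.
Proof.
move=> dTU; rewrite big1 // => i iU; apply: AT_out.
by rewrite (disjointFl dTU iU).
Qed.

Lemma prodAT_sub T U : T \subset U -> AT T *m AT U = #|U|%:R *: AT T.
Proof.
move=> TU; apply/matrixP => k j; rewrite mulAT rowsum_sub // subr0 [in RHS]mxE.
case: ifP => // /negbT jU; rewrite AT_out ?mulr0 //.
by apply: contra jU; apply: (subsetP TU).
Qed.

Lemma prodAT_disj T U : [disjoint T & U] -> AT T *m AT U = 0.
Proof.
move=> dTU; apply/matrixP => k j; rewrite mulAT rowsum_disj // subr0 [in RHS]mxE.
by case: ifP => // jU; rewrite AT_out ?mulr0 // (disjointFl dTU jU).
Qed.

Lemma prodAT_sub' T U : T \subset U -> AT U *m AT T = #|U|%:R *: AT T.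
Proof. by move=> TU; rewrite -[AT U]AT_tr -[AT T]AT_tr -trmx_mul prodAT_sub // linearZ /= AT_tr. Qed.

Lemma prodAT_disj' T U : [disjoint T & U] -> AT U *m AT T = 0.
Proof. by move=> dTU; rewrite -[AT U]AT_tr -[AT T]AT_tr -trmx_mul prodAT_disj // trmx0. Qed.

Lemma diag_idem m (M : 'M[rat]_m) (c : rat) : c != 0 -> M *m M = c *: M ->
  diagonalizable M.
Proof.
case: m M => [|m] M cn0 MM.
  by exists 1%:M; rewrite ?unitmx1 //; apply/is_diag_mxP => -[].
apply/diagonalizableP; exists [:: 0; c]; first by rewrite /= inE eq_sym cn0.
apply: mxminpoly_min.
rewrite !big_cons big_nil mulr1 rmorphM /= !rmorphB /= horner_mx_X !horner_mx_C.
rewrite (raddf0 (@scalar_mx rat m.+1)) subr0 mulrBr.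
have -> : M * M = M *m M by [].
have -> : M * c%:M = M *m c%:M by [].
by rewrite MM mul_mx_scalar subrr.
Qed.

Lemma sum_diag m (I : finType) (P : pred I) (F : I -> 'M[rat]_m) (l : I -> rat) :
  (forall i, P i -> is_diag_mx (F i)) -> is_diag_mx (\sum_(i | P i) l i *: F i).
Proof.
move=> H; apply/is_diag_mxP => i j ij; rewrite summxE big1 // => k Pk.
by rewrite mxE (is_diag_mxP (H k Pk)) // mulr0.
Qed.

Definition ind (S : {set 'I_n}) : 'rV[rat]_n := \row_i (i \in S)%:R.

Lemma sum_ind S T : \sum_(i in T) ind S 0 i = #|T :&: S|%:R.
Proof.
have -> : \sum_(i in T) ind S 0 i = \sum_(i in T | i \in S) (1 : rat).
  by rewrite big_mkcondr /=; apply: eq_bigr => i _; rewrite mxE; case: (i \in S).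
rewrite (eq_bigl (fun i => i \in T :&: S)) => [|i]; last by rewrite inE.
by rewrite sumr_const.
Qed.

Lemma indAT S T j : (ind S *m AT T) 0 j =
  if j \in T then #|T|%:R * (j \in S)%:R - #|T :&: S|%:R else 0.
Proof. by rewrite mulAT sum_ind mxE. Qed.

Lemma indAT0 S T : T \subset S \/ [disjoint T & S] -> ind S *m AT T = 0.
Proof.
move=> H; apply/rowP => j; rewrite indAT mxE; case: ifP => // jT.
case: H => [TS|dTS].
  by rewrite (setIidPl TS) (subsetP TS _ jT) mulr1 subrr.
by rewrite (disjoint_setI0 dTS) cards0 (disjointFr dTS jT) mulr0 subrr.
Qed.

Lemma indAT1 S T : S \subset T ->
  ind S *m AT T = #|T|%:R *: ind S - #|S|%:R *: ind T.
Proof.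
move=> ST; apply/rowP => j; rewrite indAT (setIidPr ST) !mxE.
case: ifP => jT; first by rewrite mulr1.
have -> : (j \in S) = false by apply/negP => /(subsetP ST); rewrite jT.
by rewrite !mulr0 subrr.
Qed.
End S.

Section Main.
Variables (n : nat) (R : {set {set 'I_n}}) (lambda : {set 'I_n} -> rat).
Hypothesis HR : species_of_tree R.
Implicit Types T U C : {set 'I_n}.

Lemma lam T U : T \in R -> U \in R ->
  [disjoint T & U] \/ T \subset U \/ U \subset T.
Proof. by case: HR => _ _; apply. Qed.

Lemma card2 T : T \in R -> (2 <= #|T|)%N.
Proof. by case: HR => _ H _; apply: H. Qed.

Lemma commAT T U : T \in R -> U \in R -> AT T *m AT U = AT U *m AT T.
Proof.
move=> TR UR; case: (lam TR UR) => [d|[s|s]].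
- by rewrite prodAT_disj // prodAT_disj'.
- by rewrite prodAT_sub // prodAT_sub'.
- by rewrite prodAT_sub' // prodAT_sub.
Qed.

Lemma commA T : T \in R -> AT T *m Asum R lambda = Asum R lambda *m AT T.
Proof.
move=> TR; rewrite /Asum mulmx_sumr mulmx_suml; apply: eq_bigr => U UR.
by rewrite -scalemxAr -scalemxAl commAT.
Qed.

Lemma diagA : diagonalizable (Asum R lambda).
Proof.
have [] := @codiagonalizableP _ _ [seq AT T | T <- enum R].
move=> H _; case: H => [|P Pu /allP HP].
  split.
    move=> _ _ /mapP[T + ->] /mapP[U + ->]; rewrite !mem_enum => TR UR.
    exact: commAT.
  move=> _ /mapP[T + ->]; rewrite mem_enum => TR.
  apply: (@diag_idem _ _ (#|T|%:R)); last exact: prodAT_sub.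
  by rewrite pnatr_eq0 -lt0n; apply: leq_trans (card2 TR).
exists P => //; change (is_diag_mx (conjmx P (Asum R lambda))).
rewrite /conjmx /Asum mulmx_sumr mulmx_suml.
rewrite (eq_bigr (fun T => lambda T *: (P *m AT T *m pinvmx P))); last first.
  by move=> T _; rewrite -scalemxAr -scalemxAl.
apply: sum_diag => T TR; apply: (HP (AT T)).
by apply: map_f; rewrite mem_enum.
Qed.


Definition mu (T1 : {set 'I_n}) := \sum_(T in R | T1 \subset T) lambda T * #|T|%:R.

Lemma vA m (v : 'M[rat]_(m, n)) : v *m Asum R lambda = \sum_(T in R) lambda T *: (v *m AT T).
Proof. by rewrite /Asum mulmx_sumr; apply: eq_bigr => T _; rewrite scalemxAr. Qed.

Lemma sum_eig (w : 'rV[rat]_n) (T1 : {set 'I_n}) :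
  (forall T, T \in R -> w *m AT T = if T1 \subset T then #|T|%:R *: w else 0) ->
  w *m Asum R lambda = mu T1 *: w.
Proof.
move=> H; rewrite vA /mu big_mkcondr scaler_suml /=; apply: eq_bigr => T TR.
rewrite H //; case: ifP => _; last by rewrite scaler0 scale0r.
by rewrite scalerA.
Qed.

Lemma eig_dir a : eigenvalue (Asum R lambda) a ->
  a = 0 \/ exists2 T1, T1 \in R & a = mu T1.
Proof.
case/eigenvalueP => v vAv vn0.
have [S0|] := eqVneq [set T in R | v *m AT T != 0] set0.
  left; move: vAv; rewrite vA big1 => [|T TR].
    by move/esym/eqP; rewrite scaler_eq0 (negbTE vn0) orbF => /eqP.
  have : T \notin [set T in R | v *m AT T != 0] by rewrite S0 inE.
  by rewrite inE TR /= negbK => /eqP ->; rewrite scaler0.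
case/set0Pn => T0 T0S; right.
case: (arg_minnP (fun T => #|T|) T0S) => T1 T1S minT1.
have : T1 \in [set T in R | v *m AT T != 0] := T1S.
rewrite inE => /andP[T1R wn0].
exists T1 => //.
set w := v *m AT T1.
have wA : w *m Asum R lambda = a *: w.
  by rewrite /w -mulmxA commA // mulmxA vAv -scalemxAl.
have wT : forall T, T \in R -> w *m AT T = if T1 \subset T then #|T|%:R *: w else 0.
  move=> T TR; rewrite /w -mulmxA; case: ifP => T1T.
    by rewrite prodAT_sub // scalemxAr.
  case: (lam T1R TR) => [d|[s|s]].
  - by rewrite prodAT_disj // mulmx0.
  - by rewrite s in T1T.
  rewrite prodAT_sub' // -scalemxAr.
  case: (eqVneq (v *m AT T) 0) => [->|nz]; first by rewrite scaler0.
  have TS : T \in [set T in R | v *m AT T != 0] by rewrite inE TR nz.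
  have := minT1 T TS.
  by rewrite leqNgt proper_card // properE s T1T.
have := sum_eig wT; rewrite wA => /eqP; rewrite -subr_eq0 -scalerBl scaler_eq0.
by rewrite subr_eq0 (negbTE wn0) orbF => /eqP.
Qed.


Lemma eig0 : eigenvalue (Asum R lambda) 0.
Proof.
apply/eigenvalueP; exists (ind [set: 'I_n]).
  rewrite vA scale0r big1 // => T _.
  by rewrite indAT0 ?scaler0 //; left; apply: subsetT.
have : (0 < #|[set: 'I_n]|)%N.
  by case: HR => TR _ _; apply: leq_trans (card2 TR).
rewrite card_gt0 => /set0Pn [x _]; apply/eqP => /rowP /(_ x).
by rewrite !mxE inE.
Qed.

Lemma exC T1 : T1 \in R -> exists C, [/\ C \subset T1, (0 < #|C|)%N,
  (#|C| < #|T1|)%N & forall T, T \in R -> T \proper T1 -> T \subset C \/ [disjoint T & C]].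
Proof.
move=> T1R; have [Sp0|] := eqVneq [set T in R | T \proper T1] set0.
  have : (0 < #|T1|)%N by apply: leq_trans (card2 T1R).
  rewrite card_gt0 => /set0Pn [x xT1]; exists [set x]; split.
  - by rewrite sub1set.
  - by rewrite cards1.
  - by rewrite cards1 (card2 T1R).
  move=> T TR TP; have : T \in [set T in R | T \proper T1] by rewrite inE TR TP.
  by rewrite Sp0 inE.
case/set0Pn => T0 T0S.
case: (arg_maxnP (fun T => #|T|) T0S) => C CS maxC.
have : C \in [set T in R | T \proper T1] := CS.
rewrite inE => /andP[CR CP]; exists C; split.
- exact: proper_sub CP.
- by apply: leq_trans (card2 CR).
- exact: proper_card CP.
move=> T TR TP; case: (lam TR CR) => [d|[s|s]]; [by right | by left | left].
have TS : T \in [set T in R | T \proper T1] by rewrite inE TR TP.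
have le := maxC T TS.
have /eqP <- : C == T by rewrite eqEcard s; exact: le.
exact: subxx.
Qed.

Lemma eig_conv T1 : T1 \in R -> eigenvalue (Asum R lambda) (mu T1).
Proof.
move=> T1R; have [C [CT1 C0 CT1c HC]] := exC T1R.
set w := #|T1|%:R *: ind C - #|C|%:R *: ind T1.
apply/eigenvalueP; exists w.
  apply: sum_eig => T TR; rewrite /w mulmxBl -!scalemxAl.
  case: ifP => T1T.
    rewrite !indAT1 //; last exact: subset_trans T1T.
    by apply/rowP => j; rewrite !mxE; ring.
  have [h1 h2] : ind T1 *m AT T = 0 /\ ind C *m AT T = 0.
    case: (lam T1R TR) => [d|[s|s]].
    - split; apply: indAT0; right; rewrite disjoint_sym //.
      exact: disjointWl d.
    - by rewrite s in T1T.
    have TP : T \proper T1 by rewrite properE s T1T.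
    by split; apply: indAT0; [left | apply: HC].
  by rewrite h1 h2 !scaler0 subrr.
have : (0 < #|C|)%N := C0.
rewrite card_gt0 => /set0Pn [x xC]; apply/eqP => /rowP /(_ x).
rewrite !mxE xC (subsetP CT1 _ xC) !mulr1 => /eqP; rewrite subr_eq0 eqr_nat.
by move/eqP => e; move: CT1c; rewrite e ltnn.
Qed.

End Main.

Theorem mainTheorem8 (n : nat) (R : {set {set 'I_n}})
    (lambda : {set 'I_n} -> rat) :
  species_of_tree R ->
  diagonalizable (Asum R lambda) /\
  (forall a : rat, eigenvalue (Asum R lambda) a <->
     (a = 0 \/ exists2 T1, T1 \in R &
        a = \sum_(T in R | T1 \subset T) lambda T * #|T|%:R)).
Proof.
move=> HR; split; first exact: diagA.
move=> a; split; first exact: eig_dir.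
case=> [->|[T1 T1R ->]]; first exact: eig0.
exact: (eig_conv lambda HR T1R).
Qed.
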